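(* Let $F=(\langle a_\alpha,b_\alpha,F_\alpha\rangle)_{\alpha\in A}$ be an ordinal sum of t-norms, $f:[0,1]\to[0,1]$ strictly increasing with $B_A^f\neq\emptyset$, and $\{f_\beta\}_{\beta\in B_A^f}$ the decomposition set of $f$. Let $T(x,y)=f^{(-1)}(F(f(x),f(y)))$ for $x,y\in[0,1]$ and, for $\beta\in B_A^f$, $T^\beta(x,y)=f_\beta^{(-1)}(F^\beta(f_\beta(x),f_\beta(y)))$ for $x,y\in[s_\beta,t_\beta]$. Then for every $\beta\in B_A^f$, $T(x,y)=T^\beta(x,y)$ for all $x,y\in[s_\beta,t_\beta]$ with $(x,y)\neq(s_\beta,s_\beta)$.
   Context: A t-norm is a commutative, associative map $[0,1]^2\to[0,1]$, non-decreasing in each variable, with neutral element $1$. For a non-decreasing $g:[p,q]\to[u,v]$, the pseudo-inverse is $g^{(-1)}(y)=\sup\{x\in[p,q]:g(x)<y\}$ ($y\in[u,v]$), with $\sup\emptyset=p$. Ordinal sum: $A\neq\emptyset$ is totally ordered, $\{(a_\alpha,b_\alpha)\}_{\alpha\in A}$ are pairwise disjoint non-empty open subintervals of $[0,1]$, $F_\alpha$ are t-norms, and $F(x,y)=a_\alpha+(b_\alpha-a_\alpha)F_\alpha\big(\frac{x-a_\alpha}{b_\alpha-a_\alpha},\frac{y-a_\alpha}{b_\alpha-a_\alpha}\big)$ if $(x,y)\in[a_\alpha,b_\alpha]^2$, and $F(x,y)=\min\{x,y\}$ otherwise. For $\alpha\in A$, $F^\alpha:[a_\alpha,b_\alpha]^2\to[a_\alpha,b_\alpha]$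 is $F^\alpha(x,y)=a_\alpha+(b_\alpha-a_\alpha)F_\alpha\big(\frac{x-a_\alpha}{b_\alpha-a_\alpha},\frac{y-a_\alpha}{b_\alpha-a_\alpha}\big)$. For $\alpha\in A$: $s_\alpha=\inf\{x\in[0,1]:f(x)\ge a_\alpha\}$, $t_\alpha=\sup\{x\in[0,1]:f(x)\le b_\alpha\}$ (with $\inf\emptyset=1$, $\sup\emptyset=0$); $B_A^f=\{\beta\in A: s_\beta<t_\beta\}$. The decomposition set consists of the strictly increasing maps $f_\beta:[s_\beta,t_\beta]\to[a_\beta,b_\beta]$ ($\beta\in B_A^f$) given by $f_\beta(x)=f(x)$ for $x\in(s_\beta,t_\beta)$; $f_\beta(s_\beta)=f(s_\beta)$ if $f(s_\beta)\ge a_\beta$ and $f_\beta(s_\beta)=a_\beta$ if $f(s_\beta)<a_\beta$; $f_\beta(t_\beta)=f(t_\beta)$ if $f(t_\beta)\le b_\beta$ and $f_\beta(t_\beta)=b_\beta$ if $f(t_\beta)>b_\beta$. *)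

(* Defs.v *)
From HB Require Import structures.
From mathcomp Require Import all_boot all_order all_algebra.
From mathcomp Require Import boolp classical_sets reals.
Set Implicit Arguments. Unset Strict Implicit. Unset Printing Implicit Defensive.
Import Order.TTheory GRing.Theory Num.Theory.
Local Open Scope ring_scope.
Local Open Scope classical_set_scope.

Section Defs.
Variable R : realType.

Definition in01 (x : R) : Prop := 0 <= x <= 1.

(* t-norm: a map [0,1]^2 -> [0,1] (represented as a total function R->R->R,
   only its values on [0,1]^2 matter). *)
Definition is_tnorm (T : R -> R -> R) : Prop :=
  (forall x y, in01 x -> in01 y -> in01 (T x y)) /\
  (forall x y, in01 x -> in01 y -> T x y = T y x) /\
  (forall x y z, in01 x -> in01 y -> in01 z -> T x (T y z) = T (T x y) z) /\
  (forall x x' y, in01 x -> in01 x' -> in01 y -> x <= x' -> T x y <= T x' y) /\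
  (forall x y y', in01 x -> in01 y -> in01 y' -> y <= y' -> T x y <= T x y') /\
  (forall x, in01 x -> T x 1 = x).

Definition sup_d (S : set R) (d : R) : R := if `[< S !=set0 >] then sup S else d.
Definition inf_d (S : set R) (d : R) : R := if `[< S !=set0 >] then inf S else d.

Definition pinv (p q : R) (g : R -> R) (y : R) : R :=
  sup_d [set x | p <= x <= q /\ g x < y] p.

Definition summand (a b : R) (G : R -> R -> R) (x y : R) : R :=
  a + (b - a) * G ((x - a) / (b - a)) ((y - a) / (b - a)).

Definition is_ordinal_sum (A : Type) (a b : A -> R) (Fs : A -> R -> R -> R)
  (F : R -> R -> R) : Prop :=
  inhabited A /\
  (forall al, 0 <= a al /\ a al < b al /\ b al <= 1) /\
  (forall al be, al <> be ->
     forall z, ~ (a al < z < b al /\ a be < z < b be)) /\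
  (forall al, is_tnorm (Fs al)) /\
  (forall x y, in01 x -> in01 y ->
     (forall al, a al <= x <= b al -> a al <= y <= b al ->
        F x y = summand (a al) (b al) (Fs al) x y) /\
     ((forall al, ~ (a al <= x <= b al /\ a al <= y <= b al)) ->
        F x y = Order.min x y)).

Definition strictly_incr01 (f : R -> R) : Prop :=
  (forall x, in01 x -> in01 (f x)) /\
  (forall x y, in01 x -> in01 y -> x < y -> f x < f y).

Definition s_of (f : R -> R) (a : R) : R :=
  inf_d [set x | in01 x /\ a <= f x] 1.
Definition t_of (f : R -> R) (b : R) : R :=
  sup_d [set x | in01 x /\ f x <= b] 0.

Definition f_dec (f : R -> R) (a b : R) (x : R) : R :=
  let s := s_of f a in let t := t_of f b in
  if `[< x = s >] then (if a <= f s then f s else a)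
  else if `[< x = t >] then (if f t <= b then f t else b)
  else f x.

End Defs.

(* Main.v *)
Require Import Defs.
From HB Require Import structures.
From mathcomp Require Import all_boot all_order all_algebra.
From mathcomp Require Import boolp classical_sets reals.
From mathcomp Require Import lra.
Import Order.TTheory GRing.Theory Num.Theory.
Local Open Scope ring_scope.
Local Open Scope classical_set_scope.

Lemma supd_char (R : realType) (S : set R) d c :
  (forall x, S x -> x <= c) -> (forall e, e < c -> exists2 x, S x & e < x) ->
  sup_d S d = c.
Proof.
move=> ub ap.
have [x0 Sx0 _] := ap (c - 1) ltac:(lra).
rewrite /sup_d; have -> : `[< S !=set0 >] = true by apply/asboolP; exists x0.
apply/eqP; rewrite eq_le; apply/andP; split.
  by apply: ge_sup; [exists x0 | exact: ub].
rewrite leNgt; apply/negP => /ap [x Sx lt].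
have : x <= sup S by apply: ub_le_sup => //; exists c.
by rewrite leNgt lt.
Qed.

Lemma supd_single (R : realType) (S : set R) c :
  (forall x, S x -> x = c) -> sup_d S c = c.
Proof.
move=> H; rewrite /sup_d; case: ifPn => // /asboolP [x Sx].
apply/eqP; rewrite eq_le; apply/andP; split.
  by apply: ge_sup; [exists x | move=> y /H ->].
by rewrite -{1}(H x Sx); apply: ub_le_sup => //; exists c => y /H ->.
Qed.

Lemma Pgen (R : realType) (lo hi : R) g z c : lo <= c -> c <= hi ->
 (forall x, lo <= x <= hi -> g x < z -> x <= c) ->
 (forall x, lo <= x <= hi -> x < c -> g x < z) -> pinv lo hi g z = c.
Proof.
move=> loc chi H1 H2; rewrite /pinv.
case: (ltrP lo c) => [lt | le].
  apply: supd_char; first by move=> x [Hx Hg]; exact: H1.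
  move=> e ec; case: (ltrP e lo) => el.
    exists ((lo + c) / 2); last by lra.
    split; first by apply/andP; split; lra.
    by apply: H2; [apply/andP; split|]; lra.
  exists ((e + c) / 2); last by lra.
  split; first by apply/andP; split; lra.
  by apply: H2; [apply/andP; split|]; lra.
have E : lo = c by apply/eqP; rewrite eq_le le loc.
subst lo.
apply: supd_single => x [/andP [Hx1 Hx2] Hg].
have := H1 x (introT andP (conj Hx1 Hx2)) Hg; lra.
Qed.
Section S.
Context {R : realType}.
Implicit Types (G : R -> R -> R).

Lemma in01_1 : in01 (1 : R). Proof. by rewrite /in01 ler01 lexx. Qed.
Lemma in01_0 : in01 (0 : R). Proof. by rewrite /in01 ler01 lexx. Qed.

Lemma G1r G w : is_tnorm G -> in01 w -> G w 1 = w.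
Proof. by move=> [_ [_ [_ [_ [_ H]]]]] /H. Qed.
Arguments G1r {G w}.
Lemma G1l G w : is_tnorm G -> in01 w -> G 1 w = w.
Proof. move=> [H1 [C [_ [_ [_ H]]]]] hw; rewrite (C 1 w in01_1 hw); exact: H. Qed.
Lemma G0l G w : is_tnorm G -> in01 w -> G 0 w = 0.
Proof.
move=> hG hw; have [H1 [C [_ [_ [M2 H]]]]] := hG.
have h1 : G 0 w <= G 0 1.
  apply: M2 => //; [exact: in01_0|exact: in01_1|by case/andP: hw].
have e := G1r hG in01_0; rewrite e in h1.
have /andP [h2 _] := H1 0 w in01_0 hw.
by apply/eqP; rewrite eq_le h1 h2.
Qed.
Lemma G0r G w : is_tnorm G -> in01 w -> G w 0 = 0.
Proof. move=> hG hw; have [_ [C _]] := hG; rewrite (C w 0 hw in01_0); exact: G0l. Qed.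
Lemma Gdiag G w : is_tnorm G -> in01 w -> G w w <= w.
Proof.
move=> hG hw; have [_ [_ [_ [_ [M2 _]]]]] := hG.
rewrite -{3}(G1r hG hw); apply: M2 => //; [exact: in01_1|by case/andP: hw].
Qed.
Lemma Gin G u v : is_tnorm G -> in01 u -> in01 v -> 0 <= G u v <= 1.
Proof. by move=> [H _] hu hv; apply: H. Qed.

Arguments G1l {G w}. Arguments G0l {G w}. Arguments G0r {G w}. Arguments Gdiag {G w}. Arguments Gin {G u v}.
Definition wr (a b u : R) := (u - a) / (b - a).

Lemma wr_in a b u : a < b -> a <= u <= b -> in01 (wr a b u).
Proof.
move=> ab /andP [h1 h2]; rewrite /in01 /wr; apply/andP; split.
  by apply: divr_ge0; lra.
by rewrite ler_pdivrMr ?mul1r; lra.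
Qed.
Lemma wr_a a b : wr a b a = 0.
Proof. by rewrite /wr subrr mul0r. Qed.
Lemma wr_b a b : a < b -> wr a b b = 1.
Proof. by move=> ab; rewrite /wr divff //; apply/eqP; lra. Qed.
Lemma wr_K a b u : a < b -> a + (b - a) * wr a b u = u.
Proof.
move=> ab; rewrite /wr mulrC divfK; first lra. apply/eqP; lra.
Qed.

Arguments wr_in {a b u}. Arguments wr_b {a b}. Arguments wr_K {a b}.
Lemma summandE a b G u v : summand a b G u v = a + (b - a) * G (wr a b u) (wr a b v).
Proof. by []. Qed.

Lemma sum_in a b G u v : is_tnorm G -> a < b -> a <= u <= b -> a <= v <= b ->
  a <= summand a b G u v <= b.
Proof.
move=> hG ab hu hv; rewrite summandE.
have /andP [g0 g1] := Gin hG (wr_in ab hu) (wr_in ab hv).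
set g := G _ _ in g0 g1 *.
apply/andP; split; nra.
Qed.
Lemma sum_al a b G v : is_tnorm G -> a < b -> a <= v <= b -> summand a b G a v = a.
Proof. move=> hG ab hv; rewrite summandE wr_a (G0l hG (wr_in ab hv)); lra. Qed.
Lemma sum_ar a b G u : is_tnorm G -> a < b -> a <= u <= b -> summand a b G u a = a.
Proof. move=> hG ab hv; rewrite summandE wr_a (G0r hG (wr_in ab hv)); lra. Qed.
Lemma sum_bl a b G v : is_tnorm G -> a < b -> a <= v <= b -> summand a b G b v = v.
Proof. move=> hG ab hv; rewrite summandE (wr_b ab) (G1l hG (wr_in ab hv)) (wr_K _ ab) //.
Qed.
Lemma sum_br a b G u : is_tnorm G -> a < b -> a <= u <= b -> summand a b G u b = u.
Proof. move=> hG ab hv; rewrite summandE (wr_b ab) (G1r hG (wr_in ab hv)) (wr_K _ ab) //. Qed.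
Lemma sum_diag a b G u : is_tnorm G -> a < b -> a <= u <= b ->
  a <= summand a b G u u <= u.
Proof.
move=> hG ab hu; rewrite summandE.
have hw := wr_in ab hu.
have hd := Gdiag hG hw.
have /andP [g0 _] := Gin hG hw hw.
have hK := wr_K u ab.
set g := G _ _ in hd g0 *; set w := wr a b u in hw hd hK *.
apply/andP; split; nra.
Qed.
End S.

Theorem proposition4p1 (R : realType) (A : Type) (a b : A -> R)
  (Fs : A -> R -> R -> R) (F : R -> R -> R) (f : R -> R) :
  is_ordinal_sum a b Fs F ->
  strictly_incr01 f ->
  (exists be, s_of f (a be) < t_of f (b be)) ->
  forall be, s_of f (a be) < t_of f (b be) ->
  let s := s_of f (a be) in
  let t := t_of f (b be) in
  let fb := f_dec f (a be) (b be) in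
  forall x y, s <= x <= t -> s <= y <= t -> ~ (x = s /\ y = s) ->
    pinv 0 1 f (F (f x) (f y)) =
    pinv s t fb (summand (a be) (b be) (Fs be) (fb x) (fb y)).
Proof.
move=> HOS Hf _ be Hst s t fb x y Hx Hy Hnss.
have [_ [Hab [Hdisj [Htn HF]]]] := HOS.
have [Hf01 Hfinc] := Hf.
have [ha0 [hab hb1]] := Hab be.
have hG := Htn be.
pose Ss := [set u | in01 u /\ a be <= f u].
pose Tt := [set u | in01 u /\ f u <= b be].
have sdef : s = inf_d Ss 1 := erefl.
have tdef : t = sup_d Tt 0 := erefl.
have fbdef : forall u, fb u = if `[< u = s >] then (if a be <= f s then f s else a be)
   else if `[< u = t >] then (if f t <= b be then f t else b be) else f u
   := fun u => erefl.
have Sslb : has_lbound Ss by exists 0 => u [/andP [h _] _].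
have Ttub : has_ubound Tt by exists 1 => u [/andP [_ h] _].
have t1 : t <= 1.
  rewrite tdef /sup_d; case: ifPn => [/asboolP ne|_]; last exact: ler01.
  by apply: ge_sup => // u [/andP [_ h] _].
have s0 : 0 <= s.
  rewrite sdef /inf_d; case: ifPn => [/asboolP ne|_]; last exact: ler01.
  by apply: lb_le_inf => // u [/andP [h _] _].
have Ssne : Ss !=set0.
  apply: contrapT => hn; move: Hst; rewrite -/s sdef /inf_d.
  rewrite asboolF // => h; have := le_lt_trans t1 h; by rewrite ltxx.
have Ttne : Tt !=set0.
  apply: contrapT => hn; move: Hst; rewrite -/s -/t tdef /sup_d.
  rewrite asboolF // => h; have := le_lt_trans s0 h; by rewrite ltxx.
have sE : s = inf Ss by rewrite sdef /inf_d asboolT.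
have tE : t = sup Tt by rewrite tdef /sup_d asboolT.
have Hst' : s < t := Hst.
have F2 : forall u, in01 u -> u < s -> f u < a be.
  move=> u hu us; rewrite ltNge; apply/negP => h.
  have : s <= u by rewrite sE; apply: ge_inf.
  by rewrite leNgt us.
have F3 : forall u, in01 u -> s < u -> a be < f u.
  move=> u hu su; rewrite sE in su; have [y0 [hy0 hay0] y0u] := inf_lt Ssne su.
  exact: (le_lt_trans hay0 (Hfinc _ _ hy0 hu y0u)).
have F4 : forall u, in01 u -> t < u -> b be < f u.
  move=> u hu tu; rewrite ltNge; apply/negP => h.
  have : u <= t by rewrite tE; apply: ub_le_sup.
  by rewrite leNgt tu.
have F5 : forall u, in01 u -> u < t -> f u < b be.
  move=> u hu ut; rewrite tE in ut; have [y0 [hy0 hay0] y0u] := sup_gt Ttne ut.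
  exact: (lt_le_trans (Hfinc _ _ hu hy0 y0u) hay0).
clearbody fb s t. clear sdef tdef. clearbody Ss Tt.
have inst : forall u, s <= u <= t -> in01 u.
  move=> u /andP [h1 h2]; rewrite /in01; apply/andP; split; lra.
have s01 : in01 s by apply: inst; apply/andP; split; lra.
have t01 : in01 t by apply: inst; apply/andP; split; lra.
have fbE : forall u, s <= u <= t -> a be <= f u -> f u <= b be -> fb u = f u.
  move=> u hu h1 h2; rewrite fbdef.
  case: (pselect (u = s)) => [E|ns]; first by rewrite asboolT // -E h1.
  rewrite asboolF //; case: (pselect (u = t)) => [E|nt]; first by rewrite asboolT // -E h2.
  by rewrite asboolF.
have fbR : forall u, s <= u <= t -> a be <= fb u <= b be.
  move=> u hu; have hu01 := inst u hu; move: (hu) => /andP [hu1 hu2]; rewrite fbdef.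
  case: (pselect (u = s)) => [E|ns].
    rewrite asboolT //; case: (lerP (a be) (f s)) => h; last by apply/andP; split; lra.
    have := F5 s s01 Hst'; move=> h'; apply/andP; split; lra.
  rewrite asboolF //; have su : s < u by rewrite lt_neqAle hu1 andbT; apply/eqP => E; apply: ns.
  have := F3 u hu01 su => hau.
  case: (pselect (u = t)) => [E|nt].
    rewrite asboolT //; rewrite E in hau; case: (lerP (f t) (b be)) => h; apply/andP; split; lra.
  rewrite asboolF //; have ut : u < t by rewrite lt_neqAle hu2 andbT; apply/eqP.
  have := F5 u hu01 ut => hub; apply/andP; split; lra.
have fb_lt : forall u, s <= u <= t -> u < t -> fb u < b be.
  move=> u hu ut; have hu01 := inst u hu; move: (hu) => /andP [hu1 hu2]; rewrite fbdef.
  case: (pselect (u = s)) => [E|ns].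
    rewrite asboolT //; case: (lerP (a be) (f s)) => h; last lra.
    exact: F5 s s01 Hst'.
  rewrite asboolF // asboolF; last by move=> E; rewrite E ltxx in ut.
  exact: F5.
have fbb : forall u, s < u <= t -> fb u < b be -> f u = fb u.
  move=> u /andP [hu1 hu2] h; move: h; rewrite fbdef.
  have ns : u <> s by move=> E; rewrite E ltxx in hu1.
  rewrite asboolF //; case: (pselect (u = t)) => [E|nt].
    rewrite asboolT //; case: (lerP (f t) (b be)) => h; first by rewrite E.
    by rewrite ltxx.
  by rewrite asboolF.
have ML : forall z, a be <= z <= b be -> pinv 0 1 f z = pinv s t fb z.
  move=> z /andP [hz1 hz2].
  case: (pselect (exists w, s < w <= t /\ f w < z)) => [[w [hw hfw]] | hn].
    move: (hw) => /andP [hw1 hw2].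
    have hws : s <= w <= t by apply/andP; split; lra.
    have hw01 := inst w hws.
    have fbw : fb w = f w by apply: fbE => //; [exact: ltW (F3 w hw01 hw1) | lra].
    rewrite /pinv; set L := [set _ | _]; set Rs := [set _ | _].
    have Lw : L w by split.
    have Rw : Rs w by split; rewrite ?fbw.
    have ne1 : L !=set0 by exists w.
    have ne2 : Rs !=set0 by exists w.
    have ubL : has_ubound L by exists 1 => u [/andP [_ h] _].
    have ubR : has_ubound Rs by exists t => u [/andP [_ h] _].
    rewrite /sup_d (asboolT ne1) (asboolT ne2).
    apply/eqP; rewrite eq_le; apply/andP; split; apply: ge_sup => // l [hl1 hl2].
      case: (lerP l s) => ls.
        have := ub_le_sup ubR Rw; lra.
      have hl01 : in01 l := hl1.
      have lt : l <= t.
        rewrite leNgt; apply/negP => tl; have := F4 l hl01 tl; lra.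
      have hl : s <= l <= t by apply/andP; split; lra.
      apply: ub_le_sup => //; split => //.
      rewrite fbE //; [exact: ltW (F3 l hl01 ls) | lra].
    move: (hl1) => /andP [hl3 hl4].
    case: (lerP l s) => ls.
      have := ub_le_sup ubL Lw; lra.
    apply: ub_le_sup => //; split; first exact: inst.
    rewrite fbb //; [apply/andP; split; lra | lra].
  transitivity s.
    apply: Pgen => //; first by case/andP: s01.
      move=> u hu hfu; rewrite leNgt; apply/negP => su.
      case: (lerP u t) => ut.
        by apply: hn; exists u; split => //; apply/andP; split.
      have := F4 u hu ut; lra.
    move=> u hu us; have := F2 u hu us; lra.
  symmetry; apply: Pgen => //; first lra.
    move=> u hu hfu; rewrite leNgt; apply/negP => su.
    move: (hu) => /andP [_ ut].
    have hsu : s < u <= t by apply/andP; split.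
    have := fbb u hsu ltac:(lra) => e.
    by apply: hn; exists u; split => //; rewrite e.
  move=> u /andP [h1 _] h2; lra.


have hx01 := inst x Hx. have hy01 := inst y Hy.
move: (Hx) (Hy) => /andP [hx1 hx2] /andP [hy1 hy2].
have hfx := Hf01 x hx01. have hfy := Hf01 y hy01.
have [HFs HFm] := HF (f x) (f y) hfx hfy.
have noint1 : forall p q, p < a be -> a be < q -> forall al,
    ~ (a al <= p <= b al /\ a al <= q <= b al).
  move=> p q hp hq al [/andP [h1 h2] /andP [h3 h4]].
  case: (pselect (al = be)) => [E|ne]; first by rewrite E in h1; lra.
  have [al1 [al2 al3]] := Hab al.
  case: (lerP (b be) q) => hbq.
    apply: (Hdisj al be ne ((a be + b be) / 2)); split; apply/andP; split; lra.
  apply: (Hdisj al be ne ((a be + q) / 2)); split; apply/andP; split; lra.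
have noint2 : forall p q, p < b be -> b be < q -> forall al,
    ~ (a al <= p <= b al /\ a al <= q <= b al).
  move=> p q hp hq al [/andP [h1 h2] /andP [h3 h4]].
  case: (pselect (al = be)) => [E|ne]; first by rewrite E in h4; lra.
  have [al1 [al2 al3]] := Hab al.
  case: (lerP p (a be)) => hpa.
    apply: (Hdisj al be ne ((a be + b be) / 2)); split; apply/andP; split; lra.
  apply: (Hdisj al be ne ((p + b be) / 2)); split; apply/andP; split; lra.
have fbs : a be <= f s = false -> fb s = a be.
  by move=> h; rewrite fbdef asboolT // h.
have fbt : f t <= b be = false -> fb t = b be.
  move=> h; rewrite fbdef asboolF; last by move=> E; rewrite E ltxx in Hst'.
  by rewrite asboolT // h.
have Ls : forall u, u = s -> pinv 0 1 f (f u) = s.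
  move=> u ->; apply: Pgen => //; first by case/andP: s01.
    move=> v hv hfv; rewrite leNgt; apply/negP => sv.
    have := Hfinc s v s01 hv sv; lra.
  move=> v hv vs; exact: Hfinc.
have Ra : pinv s t fb (a be) = s.
  apply: Pgen => //; first lra.
    move=> v hv hfv; have := fbR v hv; lra.
  move=> v /andP [h1 _] h2; lra.
case: (ltrP (f x) (a be)) => hxa.
  have xs : x = s.
    apply/eqP; rewrite eq_le hx1 andbT leNgt; apply/negP => sx.
    have := F3 x hx01 sx; lra.
  have sy : s < y.
    rewrite lt_neqAle hy1 andbT; apply/eqP => E; apply: Hnss; split => //.
  have hay := F3 y hy01 sy.
  rewrite HFm; last by move=> al; apply: noint1.
  rewrite min_l; last lra.
  rewrite Ls // xs fbs; last by rewrite leNgt -xs hxa.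
  rewrite sum_al //; last exact: fbR.

case: (ltrP (f y) (a be)) => hya.
  have ys : y = s.
    apply/eqP; rewrite eq_le hy1 andbT leNgt; apply/negP => sy.
    have := F3 y hy01 sy; lra.
  have sx : s < x.
    rewrite lt_neqAle hx1 andbT; apply/eqP => E; apply: Hnss; split => //.
  have hax := F3 x hx01 sx.
  rewrite HFm; last by move=> al [h1 h2]; apply: (noint1 (f y) (f x) hya hax al).
  rewrite min_r; last lra.
  rewrite Ls // ys fbs; last by rewrite leNgt -ys hya.
  rewrite sum_ar //; last exact: fbR.
case: (ltrP (b be) (f x)) => hxb; case: (ltrP (b be) (f y)) => hyb.
-
  have xt : x = t.
    apply/eqP; rewrite eq_le hx2 /= leNgt; apply/negP => xt.
    have := F5 x hx01 xt; lra.
  have yt : y = t.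
    apply/eqP; rewrite eq_le hy2 /= leNgt; apply/negP => yt.
    have := F5 y hy01 yt; lra.
  subst x y.
  have fbx : fb t = b be by rewrite fbt // leNgt hxb.
  rewrite fbx sum_bl //; last by apply/andP; split; lra.
  have [zL1 zL2] : b be <= F (f t) (f t) /\ F (f t) (f t) <= f t.
    case: (pselect (exists al, a al <= f t <= b al)) => [[al hal]|hn].
      rewrite (HFs al hal hal).
      have [al1 [al2 al3]] := Hab al.
      have hb : b be <= a al.
        rewrite leNgt; apply/negP => hlt.
        case: (pselect (al = be)) => [E|ne].
          by move: hal; rewrite E => /andP [_ h]; lra.
        move: hal => /andP [h1 h2].
        case: (lerP (a al) (a be)) => hq.
          apply: (Hdisj al be ne ((a be + b be) / 2)); split; apply/andP; split; lra.
        apply: (Hdisj al be ne ((a al + b be) / 2)); split; apply/andP; split; lra.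
      have /andP [d1 d2] := @sum_diag _ (a al) (b al) (Fs al) (f t) (Htn al) al2 hal.
      split; lra.
    rewrite HFm; last by move=> al [h _]; apply: hn; exists al.
    rewrite minxx; split; lra.
  transitivity t.
    apply: Pgen => //; first lra.
      move=> v hv hfv; rewrite leNgt; apply/negP => tv.
      have := Hfinc t v t01 hv tv; lra.
    move=> v hv vt; have := F5 v hv vt; lra.
  symmetry; apply: Pgen; [exact: ltW Hst' | exact: lexx | by move=> v /andP [_ h] | exact: fb_lt].
-
  have xt : x = t.
    apply/eqP; rewrite eq_le hx2 /= leNgt; apply/negP => xt.
    have := F5 x hx01 xt; lra.
  have yt : y < t.
    rewrite lt_neqAle hy2 andbT; apply/eqP => E; rewrite E -xt in hyb; lra.
  have hyl := F5 y hy01 yt.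
  have fbx : fb x = b be by rewrite xt fbt // -xt leNgt hxb.
  have fby : fb y = f y by apply: fbE => //; exact: ltW.
  rewrite HFm; last by move=> al [h1 h2]; exact: (noint2 _ _ hyl hxb al (conj h2 h1)).
  rewrite min_r; last lra.
  rewrite fbx fby sum_bl //; last by apply/andP; split; lra.
  by apply: ML; apply/andP; split; lra.
-
  have yt : y = t.
    apply/eqP; rewrite eq_le hy2 /= leNgt; apply/negP => yt.
    have := F5 y hy01 yt; lra.
  have xt : x < t.
    rewrite lt_neqAle hx2 andbT; apply/eqP => E; rewrite E -yt in hxb; lra.
  have hxl := F5 x hx01 xt.
  have fby : fb y = b be by rewrite yt fbt // -yt leNgt hyb.
  have fbx : fb x = f x by apply: fbE => //; exact: ltW.
  rewrite HFm; last by move=> al [h1 h2]; exact: (noint2 _ _ hxl hyb al (conj h1 h2)).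
  rewrite min_l; last lra.
  rewrite fbx fby sum_br //; last by apply/andP; split; lra.
  by apply: ML; apply/andP; split; lra.
-
  have fbx : fb x = f x by apply: fbE.
  have fby : fb y = f y by apply: fbE.
  have hx' : a be <= f x <= b be by apply/andP; split.
  have hy' : a be <= f y <= b be by apply/andP; split.
  rewrite (HFs be hx' hy') fbx fby.
  by apply: ML; apply: sum_in.
Qed.
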